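(* For every positive integer $n$: (i) $b^{2}_{3,4}(6n+4)\equiv 0\pmod 2$; (ii) $b^{2}_{3,4}(6n+2)\equiv b^{3}_{3}(n)\pmod 2$; (iii) $b^{2}_{3,4}(12n+6)\equiv 0\pmod 2$; (iv) $b^{2}_{3,4}(12n)\equiv p(n)\pmod 2$.
   Context: For integers $r\ge1$ write $f_r=\prod_{j\ge1}(1-q^{rj})$. $b^{2}_{3,4}(n)$ is the number of $2$-colored partitions of $n$ into parts not divisible by $3$ or $4$, i.e. $\sum_{n\ge0}b^2_{3,4}(n)q^n=\dfrac{f_3^2f_4^2}{f_1^2f_{12}^2}$. $b^{3}_{3}(n)$ is the number of $3$-colored partitions of $n$ into parts not divisible by $3$, i.e. $\sum_{n\ge0}b^3_3(n)q^n=\dfrac{f_3^3}{f_1^3}$. $p(n)$ is the ordinary partition function, $\sum_{n\ge0}p(n)q^n=1/f_1$. *)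

(* Defs.v *)
From mathcomp Require Import all_boot all_order all_algebra.
Set Implicit Arguments. Unset Strict Implicit. Unset Printing Implicit Defensive.
Import GRing.Theory.
Local Open Scope ring_scope.

(* Truncations (exact in all coefficients of degree <= n) of the q-series
   f_r = prod_{j>=1} (1 - q^{rj}) and 1/f_r = prod_{j>=1} sum_{k>=0} q^{rjk},
   as integer polynomials. *)
Definition f_trunc (r n : nat) : {poly int} :=
  \prod_(j < n) (1 - 'X^(r * j.+1)).
Definition finv_trunc (r n : nat) : {poly int} :=
  \prod_(j < n) \sum_(k < n.+1) 'X^(r * j.+1 * k).

Definition b2_34 (n : nat) : int :=
  (f_trunc 3 n ^+ 2 * f_trunc 4 n ^+ 2 *
   finv_trunc 1 n ^+ 2 * finv_trunc 12 n ^+ 2)`_n.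

Definition b3_3 (n : nat) : int :=
  (f_trunc 3 n ^+ 3 * finv_trunc 1 n ^+ 3)`_n.

Definition partp (n : nat) : int := (finv_trunc 1 n)`_n.

(* Main.v *)
Require Import Defs.
From mathcomp Require Import all_boot all_order all_algebra.
From mathcomp Require Import zify ring lra.
Set Implicit Arguments. Unset Strict Implicit. Unset Printing Implicit Defensive.
Import GRing.Theory.
Local Open Scope ring_scope.
Notation F2 := 'F_2.
Notation P := {poly F2}.
Lemma two0 : (2%:R : F2) = 0. Proof. exact: (pchar_Fp_0 (isT : prime 2)). Qed.
Lemma two0P : (2%:R : P) = 0. Proof. by rewrite -polyC_natr two0. Qed.
Lemma oppP (p : P) : - p = p.
Proof. by apply/eqP; rewrite eq_sym -subr_eq0 opprK -mulr2n -mulr_natr two0P mulr0. Qed.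
Lemma sqrD (p q : P) : (p + q) ^+ 2 = p ^+ 2 + q ^+ 2.
Proof. by rewrite sqrrD -mulr_natr two0P mulr0 addr0. Qed.

Definition eqX (N : nat) (p q : P) := forall i, (i < N)%N -> p`_i = q`_i.

Lemma eqX_refl N p : eqX N p p. Proof. by []. Qed.
Lemma eqX_sym N p q : eqX N p q -> eqX N q p. Proof. by move=> h i /h. Qed.
Lemma eqX_trans N p q r : eqX N p q -> eqX N q r -> eqX N p r.
Proof. by move=> h1 h2 i hi; rewrite h1 ?h2. Qed.
Lemma eqX_le N N' p q : (N' <= N)%N -> eqX N p q -> eqX N' p q.
Proof. by move=> hN h i hi; apply: h; apply: leq_trans hN. Qed.
Lemma eqX_add N p q p' q' : eqX N p p' -> eqX N q q' -> eqX N (p + q) (p' + q').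
Proof. by move=> h1 h2 i hi; rewrite !coefD h1 ?h2. Qed.
Lemma eqX_mul N p q p' q' : eqX N p p' -> eqX N q q' -> eqX N (p * q) (p' * q').
Proof.
move=> h1 h2 i hi; rewrite !coefM; apply: eq_bigr => j _.
rewrite h1 ?h2 //; [apply: leq_ltn_trans hi; exact: leq_subr|].
by apply: leq_ltn_trans hi; rewrite -ltnS.
Qed.
Lemma eqX_sum N (I : Type) (r : seq I) (f g : I -> P) :
  (forall i, eqX N (f i) (g i)) -> eqX N (\sum_(i <- r) f i) (\sum_(i <- r) g i).
Proof.
move=> h; elim: r => [|a r ih]; first by rewrite !big_nil.
by rewrite !big_cons; apply: eqX_add.
Qed.
Lemma eqX_prod N (I : Type) (r : seq I) (f g : I -> P) :
  (forall i, eqX N (f i) (g i)) -> eqX N (\prod_(i <- r) f i) (\prod_(i <- r) g i).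
Proof.
move=> h; elim: r => [|a r ih]; first by rewrite !big_nil.
by rewrite !big_cons; apply: eqX_mul.
Qed.
Lemma eqX_exp N p q k : eqX N p q -> eqX N (p ^+ k) (q ^+ k).
Proof.
move=> h; elim: k => [|k ih]; first by rewrite !expr0.
by rewrite !exprS; apply: eqX_mul.
Qed.
Lemma eqX_Xn1 N a : (N <= a)%N -> eqX N (1 + 'X^a) 1.
Proof.
move=> ha i hi; rewrite coefD coefXn; case: eqP => [e|]; last by rewrite addr0.
by move: hi; rewrite e ltnNge ha.
Qed.
Lemma eqX_high N e p : (N <= e)%N -> eqX N ('X^e * p) 0.
Proof.
move=> he i hi; rewrite coefXnM coef0 ifT //; exact: leq_trans hi he.
Qed.
Lemma eqX_shift N e p q : eqX N p q -> eqX (N + e) ('X^e * p) ('X^e * q).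
Proof.
move=> h i hi; rewrite !coefXnM; case: ltnP => // hie; apply: h.
by rewrite ltn_subLR // addnC.
Qed.
Lemma eqX_prod1 N (I : Type) (r : seq I) (f : I -> P) :
  (forall i, eqX N (f i) 1) -> eqX N (\prod_(i <- r) f i) 1.
Proof.
move=> h; apply: (@eqX_trans _ _ (\prod_(i <- r) 1)); first exact: eqX_prod.
by rewrite big1.
Qed.

Definition F r M : P := \prod_(j < M) (1 + 'X^(r * j.+1)).
Definition G r M : P := \prod_(j < M) \sum_(k < M.+1) 'X^(r * j.+1 * k).

Lemma geomF2 (a M : nat) : (1 + 'X^a) * \sum_(k < M) 'X^(a * k) = 1 + 'X^(a * M) :> P.
Proof.
have h := subrX1 ('X^a : P) M; rewrite !oppP in h.
rewrite [in RHS]exprM [in RHS]addrC h (addrC 'X^a).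
by congr (_ * _); apply: eq_bigr => k _; rewrite exprM.
Qed.

Lemma FG1 r M : (0 < r)%N -> eqX M.+1 (F r M * G r M) 1.
Proof.
move=> r0; rewrite /F /G -big_split /=; apply: eqX_prod1 => j.
rewrite geomF2; apply: eqX_Xn1.
by nia.
Qed.

Lemma F_stab r M M' N : (0 < r)%N -> (N <= r * M.+1)%N -> (M <= M')%N ->
  eqX N (F r M') (F r M).
Proof.
move=> r0 hN /subnK <-; elim: (M' - M)%N => [|d ih]; first by rewrite add0n.
rewrite addSn /F big_ord_recr /= -[X in eqX _ _ X]mulr1; apply: eqX_mul => //.
apply: eqX_Xn1; nia.
Qed.

Lemma inv_uniq N p q q' : eqX N (p * q) 1 -> eqX N (p * q') 1 -> eqX N q q'.
Proof.
move=> h1 h2; apply: (@eqX_trans _ _ (q * (p * q'))).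
  by rewrite -[X in eqX _ X]mulr1; apply: eqX_mul => //; apply: eqX_sym.
by rewrite mulrA (mulrC q) -[X in eqX _ _ X]mul1r; apply: eqX_mul.
Qed.

Lemma FG1' r M M' N : (0 < r)%N -> (N <= M.+1)%N -> (N <= M'.+1)%N ->
  eqX N (F r M * G r M') 1.
Proof.
move=> r0 h h'; case: (leqP M M') => hM.
  apply: (@eqX_trans _ _ (F r M' * G r M')); last exact: eqX_le h' (@FG1 r M' r0).
  apply: eqX_mul => //; apply: eqX_sym; apply: F_stab => //; nia.
apply: (@eqX_trans _ _ (F r M' * G r M')); last exact: eqX_le h' (@FG1 r M' r0).
apply: eqX_mul => //; apply: F_stab => //; [nia | exact: ltnW].
Qed.

Lemma G_stab r M M' N : (0 < r)%N -> (N <= M.+1)%N -> (N <= M'.+1)%N ->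
  eqX N (G r M) (G r M').
Proof.
move=> r0 h h'; apply: (@inv_uniq _ (F r M)); exact: FG1'.
Qed.

Lemma sqr_sum (I : Type) (s : seq I) (f : I -> P) :
  (\sum_(i <- s) f i) ^+ 2 = \sum_(i <- s) (f i) ^+ 2.
Proof.
elim: s => [|a s ih]; first by rewrite !big_nil expr0n.
by rewrite !big_cons sqrD ih.
Qed.

Lemma F_sqr r M : (F r M) ^+ 2 = F (2 * r) M.
Proof.
rewrite /F -prodrXl; apply: eq_bigr => j _.
by rewrite sqrD expr1n -exprM mulnC mulnA.
Qed.

Lemma G_sqr r M : (G r M) ^+ 2 = G (2 * r) M.
Proof.
rewrite /G -prodrXl; apply: eq_bigr => j _; rewrite sqr_sum.
by apply: eq_bigr => k _; rewrite -exprM; congr ('X^_); ring.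
Qed.

Lemma F_dil d r M : (F r M) \Po 'X^d = F (d * r) M.
Proof.
rewrite /F rmorph_prod; apply: eq_bigr => j _.
by rewrite rmorphD rmorph1 /= comp_Xn_poly -exprM mulnA.
Qed.

Lemma G_dil d r M : (G r M) \Po 'X^d = G (d * r) M.
Proof.
rewrite /G rmorph_prod; apply: eq_bigr => j _; rewrite rmorph_sum.
by apply: eq_bigr => k _; rewrite /= comp_Xn_poly -exprM !mulnA.
Qed.

Lemma F2sq (c : F2) : c ^+ 2 = c.
Proof. by case: c => [[|[|]]] //= i; apply/val_inj. Qed.

Lemma sqr_dil (p : P) : p ^+ 2 = p \Po 'X^2.
Proof.
elim/poly_ind: p => [|p c ih]; first by rewrite expr0n comp_poly0.
rewrite sqrD exprMn ih comp_polyD comp_polyM comp_polyX comp_polyC.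
by rewrite -polyC_exp F2sq.
Qed.

Lemma coef_dil d (p : P) i : (0 < d)%N -> (p \Po 'X^d)`_(d * i) = p`_i.
Proof. by move=> d0; rewrite coef_comp_poly_Xn // dvdn_mulr // mulKn. Qed.

Lemma coef_dil0 d (p : P) i : (0 < d)%N -> ~~ (d %| i)%N -> (p \Po 'X^d)`_i = 0.
Proof. by move=> d0 h; rewrite coef_comp_poly_Xn // (negbTE h). Qed.

Lemma eqX_dil d N p q : (0 < d)%N -> eqX N p q -> eqX (d * N) (p \Po 'X^d) (q \Po 'X^d).
Proof.
move=> d0 h i hi; rewrite !coef_comp_poly_Xn //; case: ifP => // _; apply: h.
by rewrite ltn_divLR // mulnC.
Qed.

Fixpoint trim (k : nat) : nat := if k is k'.+1 then (trim k' + k')%N else 0%N.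
Lemma trim2 k : (2 * trim k + k = k * k)%N.
Proof. elim: k => [|k ih] //=; nia. Qed.

Section QB.
Variable R : comRingType.
Variable Q : R.
Fixpoint qbin (m k : nat) : R :=
  match m, k with
  | 0, 0 => 1 | 0, _.+1 => 0
  | m'.+1, 0 => 1
  | m'.+1, k'.+1 => qbin m' k'.+1 + Q ^+ (m' - k') * qbin m' k'
  end.

Lemma qbin_gt m k : (m < k)%N -> qbin m k = 0.
Proof.
elim: m k => [|m ih] [|k] //= h.
by rewrite !ih ?mulr0 ?addr0 // ltnW.
Qed.

Lemma prod_zero m k : (m < k)%N -> \prod_(i < k) (1 - Q ^+ (m - i)) = 0.
Proof.
move=> h; rewrite (bigD1 (Ordinal h)) //= subnn expr0 subrr mul0r //.
Qed.

Lemma qbin0 m : qbin m 0 = 1. Proof. by case: m. Qed.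

Lemma qbin_prod m k :
  qbin m k * \prod_(i < k) (1 - Q ^+ i.+1) = \prod_(i < k) (1 - Q ^+ (m - i)).
Proof.
elim: m k => [|m ih] [|k].
- by rewrite !big_ord0 mulr1.
- by rewrite /= mul0r big_ord_recl /= subn0 expr0 subrr mul0r.
- by rewrite !big_ord0 mulr1.
rewrite /= mulrDl ih [\prod_(i < k.+1) (1 - Q ^+ i.+1)]big_ord_recr /= -mulrA (mulrA (qbin m k)) ih.
rewrite big_ord_recr /= [in RHS]big_ord_recl /= subn0.
under [in RHS]eq_bigr do rewrite /bump /= add1n subSS.
set A := \prod_(i < k) (1 - Q ^+ (m - i)).
case: (leqP k m) => hk.
  have e : Q ^+ m.+1 = Q ^+ (m - k) * Q ^+ k.+1 by rewrite -exprD; congr (_ ^+ _); lia.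
  by rewrite e; ring.
by rewrite /A prod_zero // !mul0r mulr0 add0r mulr0.
Qed.

Lemma qbinom_thm (y z : R) m :
  \prod_(i < m) (y + z * Q ^+ i) =
  \sum_(k < m.+1) qbin m k * Q ^+ (trim k) * z ^+ k * y ^+ (m - k).
Proof.
elim: m => [|m ih].
  by rewrite big_ord0 big_ord1 /= !expr0 !mulr1.
rewrite big_ord_recr /= ih mulr_suml.
have -> : \sum_(i < m.+1) qbin m i * Q ^+ trim i * z ^+ i * y ^+ (m - i) * (y + z * Q ^+ m)
  = \sum_(i < m.+1) qbin m i * Q ^+ trim i * z ^+ i * y ^+ (m.+1 - i)
  + \sum_(i < m.+1) qbin m i * Q ^+ (trim i + i) * z ^+ i.+1 * y ^+ (m - i) * Q ^+ (m - i).
  rewrite -big_split /=; apply: eq_bigr => [[i hi]] _ /=.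
  rewrite subSn // !exprS exprD.
  have e : Q ^+ m = Q ^+ i * Q ^+ (m - i) by rewrite -exprD subnKC.
  rewrite e; move: (qbin m i) (Q ^+ trim i) (Q ^+ i) (Q ^+ (m - i)) (z ^+ i) (y ^+ (m - i)) => a b c d f g.
  ring.
rewrite [in RHS]big_ord_recl /= expr0 !mulr1 subn0.
under [in RHS]eq_bigr do rewrite !add0n /bump /= add1n subSS mulrDl mulrDl mulrDl.
rewrite big_split /= addrA; congr (_ + _).
  rewrite [in RHS]big_ord_recr /= qbin_gt // !mul0r addr0.
  rewrite big_ord_recl /= qbin0 subn0 !expr0 !mulr1; congr (_ + _).
apply: eq_bigr => i _ /=; move: (qbin m i) (Q ^+ (trim i + i)) (z ^+ i.+1) (y ^+ (m - i)) (Q ^+ (m - i)) => a b c d f.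
ring.
Qed.
End QB.
Section NatE. Local Open Scope nat_scope.
Lemma E3 r s n j : 0 < s -> j <= n ->
  r * s * trim (n - j) + r * (s * n - 1) * (n + n - (n - j)) =
  (r * s * trim n + r * (s * n - 1) * n) + r * (s * trim j + (s - 1) * j).
Proof.
move=> hs /subnK <-; rewrite addnK; move: (n - j) => d.
case: s hs => // s _.
have h1 := congr1 (muln (r * s.+1)) (trim2 d).
have h2 := congr1 (muln (r * s.+1)) (trim2 (d + j)).
have h3 := congr1 (muln (r * s.+1)) (trim2 j).
move: (trim d) (trim (d+j)) (trim j) h1 h2 h3 => a b c h1 h2 h3.
have -> : d + j + (d + j) - d = d + j + j by lia.
have -> : s.+1 - 1 = s by lia.
case: (posnP (d + j)) => hdj.
  have -> : d = 0 by lia. have -> : j = 0 by lia. nia.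
have -> : (s.+1 * (d + j) - 1) = s * (d+j) + (d + j).-1 by lia.
nia.
Qed.
Lemma E4 r s n j : 0 < s -> j < n ->
  r * s * trim (n.+1 + j) + r * (s * n - 1) * (n + n - (n.+1 + j)) =
  (r * s * trim n + r * (s * n - 1) * n) + r * (s * trim j.+1 + j.+1).
Proof.
move=> hs /subnK <-; move: (n - j.+1) => d.
case: s hs => // s _.
have h1 := congr1 (muln (r * s.+1)) (trim2 ((d + j.+1).+1 + j)).
have h2 := congr1 (muln (r * s.+1)) (trim2 (d + j.+1)).
have h3 := congr1 (muln (r * s.+1)) (trim2 j.+1).
move: (trim ((d + j.+1).+1 + j)) (trim (d+j.+1)) (trim j.+1) h1 h2 h3 => a b c h1 h2 h3.
have -> : d + j.+1 + (d + j.+1) - ((d + j.+1).+1 + j) = d by lia.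
have -> : (s.+1 * (d + j.+1) - 1) = s * (d+j.+1) + (d + j) by lia.
nia.
Qed.
Lemma eA r s n i : 0 < s -> i < n -> r * (s * n - 1) = r * s * i + r * (s * (n - i.+1) + (s - 1)).
Proof.
move=> hs /subnK <-; rewrite addnK; move: (n - i.+1) => d.
case: s hs => // s _; rewrite subSS subn0 -mulnA -mulnDr; congr (r * _); nia.
Qed.
Lemma eB r s n i : 0 < s -> 0 < n -> r * s * (n + i) = r * (s * n - 1) + r * (s * i + 1).
Proof.
case: s => // s _; case: n => // n _; rewrite -mulnA -mulnDr; congr (r * _).
nia.
Qed.
Lemma bnd1 r s n j N t : 1 < s -> 0 < r -> N <= n -> j <= n ->
  N <= r * s * (n - j).+1 + r * (s * t + (s - 1) * j).
Proof.
move=> s1 r0 hN hj.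
have f1 : (n - j).+1 <= r * s * (n - j).+1.
  by rewrite leq_pmull // muln_gt0 r0 ltnW.
have f2 : j <= r * (s * t + (s - 1) * j).
  apply: leq_trans (leq_pmull _ r0); apply: leq_trans (leq_addl _ _).
  by rewrite leq_pmull // subn_gt0.
lia.
Qed.
Lemma bnd2 r s n j N t : 1 < s -> 0 < r -> N <= n -> j < n ->
  N <= r * s * (n - j) + r * (s * t + j.+1).
Proof.
move=> s1 r0 hN hj.
have f1 : (n - j) <= r * s * (n - j).
  by rewrite leq_pmull // muln_gt0 r0 ltnW.
have f2 : j.+1 <= r * (s * t + j.+1).
  by apply: leq_trans (leq_pmull _ r0); apply: leq_addl.
lia.
Qed.
Lemma bnd3 r s n N t : 1 < s -> 0 < r -> N <= n ->
  N <= r * (s * t + (s - 1) * n).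
Proof.
move=> s1 r0 hN.
  apply: (leq_trans hN); apply: leq_trans (leq_pmull _ r0); apply: leq_trans (leq_addl _ _).
  by rewrite leq_pmull // subn_gt0.
Qed.
Lemma tA i : 4 * trim i + (4 - 1) * i = trim (2 * i + 0).+1.
Proof.
have h1 := trim2 i; have h2 := trim2 (2 * i + 0).+1; simpl trim in h2 |- *.
move: (trim i) (trim (2 * i + 0)) h1 h2 => a b h1 h2; nia.
Qed.
Lemma tB i : 4 * trim i.+1 + i.+1 = trim (2 * i + 1).+1.
Proof.
have h1 := trim2 i.+1; have h2 := trim2 (2 * i + 1).+1.
move: (trim i.+1) (trim (2 * i + 1).+1) h1 h2 => a b h1 h2; nia.
Qed.
Lemma tC i : trim (3 * i + 0).+1 = 3 * (3 * trim i + (3 - 1) * i).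
Proof.
have h1 := trim2 i; have h2 := trim2 (3 * i + 0).+1.
move: (trim i) (trim (3 * i + 0).+1) h1 h2 => a b h1 h2; nia.
Qed.
Lemma tD i : trim (3 * i + 1).+1 = (9 * trim i.+1).+1.
Proof.
have h1 := trim2 i.+1; have h2 := trim2 (3 * i + 1).+1.
move: (trim i.+1) (trim (3 * i + 1).+1) h1 h2 => a b h1 h2; nia.
Qed.
Lemma tE i : trim (3 * i + 2).+1 = 3 * (3 * trim i.+1 + i.+1).
Proof.
have h1 := trim2 i.+1; have h2 := trim2 (3 * i + 2).+1.
move: (trim i.+1) (trim (3 * i + 2).+1) h1 h2 => a b h1 h2; nia.
Qed.
Lemma trim_ge k : k <= trim k.+1.
Proof. by rewrite /= leq_addl. Qed.
End NatE.

Definition Prod s r n : P :=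
  \prod_(i < n) (1 + 'X^(r * (s * i + (s - 1)))) * \prod_(i < n) (1 + 'X^(r * (s * i + 1))).
Definition em s j := (s * trim j + (s - 1) * j)%N.
Definition ep s j := (s * trim j + j)%N.

Lemma prodXn c n : \prod_(i < n) ('X^(c * i) : P) = 'X^(c * trim n).
Proof.
elim: n => [|n ih]; first by rewrite big_ord0 muln0 expr0.
by rewrite big_ord_recr /= ih -exprD mulnDr.
Qed.

Lemma prod_rev n (f : nat -> P) : \prod_(i < n) f i = \prod_(i < n) f (n - i.+1)%N.
Proof. by rewrite (reindex_inj rev_ord_inj). Qed.
Lemma sum_rev n (f : nat -> P) : \sum_(i < n) f i = \sum_(i < n) f (n - i.+1)%N.
Proof. by rewrite (reindex_inj rev_ord_inj). Qed.

Lemma JTP_exact s r n : (0 < s)%N ->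
  Prod s r n =
  \sum_(j < n.+1) qbin ('X^(r * s)) (n + n) (n - j) * 'X^(r * em s j) +
  \sum_(j < n) qbin ('X^(r * s)) (n + n) (n.+1 + j) * 'X^(r * ep s j.+1).
Proof.
move=> hs.
set C := (r * s * trim n + r * (s * n - 1) * n)%N.
apply: (@mulfI _ ('X^C)); first by rewrite -size_poly_eq0 size_polyXn.
have T := qbinom_thm ('X^(r * s) : P) ('X^(r * (s * n - 1))) 1 (n + n).
rewrite big_split_ord /= in T.
have A : \prod_(i < n) ('X^(r * (s * n - 1)) + 1 * 'X^(r * s) ^+ lshift n i) =
   'X^(r * s * trim n) * \prod_(i < n) (1 + 'X^(r * (s * i + (s - 1)))) :> P.
  transitivity (\prod_(i < n) ('X^(r * s * i) * (1 + 'X^(r * (s * (n - i.+1) + (s - 1))))) : P).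
    apply: eq_bigr => [[i hi]] _ /=; rewrite mul1r -exprM mulrDr mulr1 -exprD addrC.
    by rewrite -eA.
  rewrite big_split /= prodXn; congr (_ * _).
  rewrite (prod_rev n (fun i => 1 + 'X^(r * (s * (n - i.+1) + (s - 1))))).
  apply: eq_bigr => [[i hi]] _ /=.
  congr (1 + 'X^(r * (_ + _))); congr (s * _); lia.
have B : \prod_(i < n) ('X^(r * (s * n - 1)) + 1 * 'X^(r * s) ^+ rshift n i) =
   'X^(r * (s * n - 1) * n) * \prod_(i < n) (1 + 'X^(r * (s * i + 1))) :> P.
  transitivity (\prod_(i < n) ('X^(r * (s * n - 1)) * (1 + 'X^(r * (s * i + 1)))) : P).
    apply: eq_bigr => [[i hi]] _ /=; rewrite mul1r -exprM mulrDr mulr1 -exprD.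
    by rewrite -eB //; apply: leq_ltn_trans hi.
  by rewrite big_split /= prodr_const card_ord -exprM.
rewrite A B mulrACA -exprD in T.
rewrite /Prod T -[(n + n).+1]/(n.+1 + n)%N big_split_ord /= mulrDr.
congr (_ + _).
  rewrite mulr_sumr (reindex_inj rev_ord_inj) /=; apply: eq_bigr => [[j hj]] _ /=.
  rewrite subSS expr1n mulr1 -!exprM -mulrA -exprD E3 // exprD /em.
  by rewrite mulrCA.
rewrite mulr_sumr; apply: eq_bigr => [[j hj]] _ /=.
rewrite -[(trim (n + j) + (n + j))%N]/(trim (n.+1 + j)).
rewrite expr1n mulr1 -!exprM -mulrA -exprD E4 // exprD /ep.
by rewrite mulrCA.
Qed.

Lemma qbinF r s m k L N : (0 < r)%N -> (0 < s)%N -> (k <= m)%N -> (k <= L)%N ->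
  (N <= r * s * k.+1)%N -> (N <= r * s * (m - k).+1)%N ->
  eqX N (qbin ('X^(r * s)) m k * F (r * s) L) 1.
Proof.
move=> r0 s0 km kL h1 h2.
apply: (@eqX_trans _ _ (qbin ('X^(r * s)) m k * F (r * s) k)).
  by apply: eqX_mul => //; apply: F_stab => //; rewrite muln_gt0 r0.
have := qbin_prod ('X^(r * s) : P) m k.
rewrite /F; under eq_bigr do rewrite oppP -exprM.
under [in RHS]eq_bigr do rewrite oppP -exprM.
move=> ->; apply: eqX_prod1 => [[i hi]] /=; apply: eqX_Xn1.
apply: (leq_trans h2); rewrite leq_mul2l ltn_subRL; apply/orP; right; lia.
Qed.

Lemma eqX_term N N' e (b : P) : eqX N' b 1 -> (N <= N' + e)%N -> eqX N ('X^e * b) 'X^e.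
Proof.
move=> h hN; rewrite -[X in eqX _ _ X]mulr1; apply: eqX_le hN _; exact: eqX_shift.
Qed.

Definition Ssum s r n : P := \sum_(j < n) ('X^(r * em s j) + 'X^(r * ep s j.+1)).

Lemma JTP_lim s r n N : (1 < s)%N -> (0 < r)%N -> (N <= n)%N ->
  eqX N (Prod s r n * F (r * s) (n + n)) (Ssum s r n).
Proof.
move=> s1 r0 hN; have s0 : (0 < s)%N by apply: ltnW.
rewrite JTP_exact // mulrDl !mulr_suml /Ssum big_split /=.
rewrite -[X in eqX _ _ (X + _)]addr0 big_ord_recr /=; apply: eqX_add; first apply: eqX_add.
- apply: eqX_sum => [[j hj]] /=; rewrite -mulrA (mulrC (GRing.exp _ _)) mulrA mulrC.
  apply: (@eqX_term _ (r * s * (n - j).+1)); last by rewrite /em; apply: bnd1 => //; apply: ltnW.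
  apply: qbinF => //; [lia | lia | nia].
- rewrite -mulrA (mulrC (GRing.exp _ _)) mulrA mulrC; apply: eqX_high; rewrite /em; exact: bnd3.
- apply: eqX_sum => [[j hj]] /=; rewrite -mulrA (mulrC (GRing.exp _ _)) mulrA mulrC.
  apply: (@eqX_term _ (r * s * (n - j))); last by rewrite /ep; exact: bnd2.
  apply: qbinF => //; [lia | lia | nia | ].
  have -> : ((n + n - (n.+1 + j)).+1 = n - j)%N by lia.
  by [].
Qed.

Lemma prod_split k n (f : nat -> P) :
  \prod_(j < k * n) f j = \prod_(i < n) \prod_(t < k) f (k * i + t)%N.
Proof.
elim: n => [|n ih]; first by rewrite muln0 !big_ord0.
by rewrite mulnSr big_split_ord /= ih big_ord_recr.
Qed.

Lemma sum_split k n (f : nat -> P) :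
  \sum_(j < k * n) f j = \sum_(i < n) \sum_(t < k) f (k * i + t)%N.
Proof.
elim: n => [|n ih]; first by rewrite muln0 !big_ord0.
by rewrite mulnSr big_split_ord /= ih big_ord_recr.
Qed.

Lemma sq1X e : (1 + 'X^e) ^+ 2 = 1 + 'X^(2 * e) :> P.
Proof. by rewrite sqrD expr1n -exprM mulnC. Qed.

Lemma E_lemma r M n N : (0 < r)%N -> (N <= M.+1)%N -> (N <= n)%N ->
  eqX N (F r M) (Ssum 3 r n).
Proof.
move=> r0 hM hn.
apply: (@eqX_trans _ _ (F r (3 * n))).
  case: (leqP M (3 * n)) => h.
    by apply: eqX_sym; apply: F_stab => //; nia.
  by apply: F_stab => //; [nia | apply: ltnW].
have -> : F r (3 * n) = Prod 3 r n * F (r * 3) n.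
  rewrite /F /Prod (prod_split 3 n (fun j => 1 + 'X^(r * j.+1))) -!big_split /=.
  apply: eq_bigr => i _.
  rewrite !big_ord_recr big_ord0 /= mul1r.
  have -> : (r * (3 * i + 0).+1 = r * (3 * i + 1))%N by congr (r * _); lia.
  have -> : (r * (3 * i + 1).+1 = r * (3 * i + (3 - 1)))%N by congr (r * _); lia.
  have -> : (r * (3 * i + 2).+1 = r * 3 * i.+1)%N by lia.
  by congr (_ * _); apply: mulrC.
apply: (@eqX_trans _ _ (Prod 3 r n * F (r * 3) (n + n))); last exact: JTP_lim.
apply: eqX_mul => //; apply: eqX_sym; apply: F_stab; [by rewrite muln_gt0 r0 | nia | exact: leq_addr].
Qed.

Lemma F_stab' r M M' N : (0 < r)%N -> (N <= M.+1)%N -> (N <= M'.+1)%N ->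
  eqX N (F r M) (F r M').
Proof.
move=> r0 h h'; case: (leqP M M') => hM.
  by apply: eqX_sym; apply: F_stab => //; nia.
by apply: F_stab => //; [nia | apply: ltnW].
Qed.

Lemma J_lemma r M n N : (0 < r)%N -> (N <= M.+1)%N -> (N <= n)%N ->
  eqX N (F r M ^+ 3) (Ssum 4 r n).
Proof.
move=> r0 hM hn.
have -> : F r M ^+ 3 = F r M * F (2 * r) M by rewrite exprS F_sqr.
apply: (@eqX_trans _ _ (F r (4 * n) * F (2 * r) (2 * n))).
  apply: eqX_mul; apply: F_stab' => //; try nia; by rewrite muln_gt0 r0.
have -> : F r (4 * n) * F (2 * r) (2 * n) = Prod 4 r n * F (r * 4) (n + n).
  rewrite /F /Prod (prod_split 4 n (fun j => 1 + 'X^(r * j.+1))).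
  rewrite (prod_split 2 n (fun j => 1 + 'X^(2 * r * j.+1))) addnn -mul2n.
  rewrite (prod_split 2 n (fun j => 1 + 'X^(r * 4 * j.+1))) -!big_split /=.
  apply: eq_bigr => i _.
  rewrite !big_ord_recr !big_ord0 /= !mul1r.
  have -> : (r * 4 * (2 * i + 0).+1 = 2 * (r * (4 * i + 1).+1))%N by lia.
  have -> : (r * 4 * (2 * i + 1).+1 = 2 * (r * (4 * i + 3).+1))%N by lia.
  have -> : (2 * r * (2 * i + 0).+1 = r * (4 * i + 1).+1)%N by lia.
  have -> : (2 * r * (2 * i + 1).+1 = r * (4 * i + 3).+1)%N by lia.
  have -> : (r * (4 * i + (4 - 1)) = r * (4 * i + 2).+1)%N by congr (r * _); lia.
  have -> : (r * (4 * i + 1) = r * (4 * i + 0).+1)%N by congr (r * _); lia.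
  rewrite -!sq1X.
  move: ('X^(r * (4 * i + 0).+1) : P) ('X^(r * (4 * i + 1).+1) : P)
        ('X^(r * (4 * i + 2).+1) : P) ('X^(r * (4 * i + 3).+1) : P) => a b c d.
  ring.
exact: JTP_lim.
Qed.
Arguments trim : simpl never.

Definition tsum r L : P := \sum_(k < L) 'X^(r * trim k.+1).

Lemma Ssum4_tsum r n : Ssum 4 r n = tsum r (2 * n).
Proof.
rewrite /tsum (sum_split 2 n (fun k => 'X^(r * trim k.+1))); apply: eq_bigr => i _.
by rewrite !big_ord_recr big_ord0 /= add0r /em /ep tA tB.
Qed.

Lemma tsum_split3 n : tsum 1 (3 * n) = Ssum 3 3 n + 'X * tsum 9 n.
Proof.
rewrite /tsum (sum_split 3 n (fun k => 'X^(1 * trim k.+1))) /Ssum mulr_sumr -big_split.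
apply: eq_bigr => i _; rewrite !big_ord_recr big_ord0 /= add0r !mul1n /em /ep.
rewrite tC tD tE -exprS.
by rewrite -addrA (addrC 'X^((9 * _).+1)) addrA.
Qed.

Lemma tsum_stab0 r L d N : (0 < r)%N -> (N <= L)%N -> eqX N (tsum r (L + d)) (tsum r L).
Proof.
move=> r0 hL; elim: d => [|d ih]; first by rewrite addn0.
rewrite addnS /tsum big_ord_recr /= -[X in eqX _ _ X]addr0; apply: eqX_add => //.
rewrite -[X in eqX _ X _]mulr1; apply: eqX_high.
apply: (leq_trans hL); apply: (leq_trans (leq_addr d L)).
apply: (leq_trans (trim_ge _)); exact: leq_pmull.
Qed.

Lemma tsum_stab r L L' N : (0 < r)%N -> (N <= L)%N -> (N <= L')%N ->
  eqX N (tsum r L) (tsum r L').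
Proof.
move=> r0 h h'; case: (leqP L L') => hL.
  by rewrite -(subnKC hL); apply: eqX_sym; apply: tsum_stab0.
by rewrite -(subnKC (ltnW hL)); apply: tsum_stab0.
Qed.

Lemma eqX_shiftX N p q : eqX N p q -> eqX (N + 1) ('X * p) ('X * q).
Proof. by move=> h; have := @eqX_shift N 1 p q h; rewrite expr1. Qed.

Lemma key_lemma M N : (N <= M.+1)%N ->
  eqX N (F 1 M ^+ 3) (F 3 M + 'X * F 9 M ^+ 3).
Proof.
move=> hM.
apply: (@eqX_trans _ _ (Ssum 4 1 N)); first exact: J_lemma.
rewrite Ssum4_tsum.
apply: (@eqX_trans _ _ (tsum 1 (3 * N))); first by apply: tsum_stab => //; lia.
rewrite tsum_split3; apply: eqX_add; first by apply: eqX_sym; apply: E_lemma.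
apply: (@eqX_le (N + 1)); first exact: leq_addr.
apply: eqX_shiftX.
apply: (@eqX_trans _ _ (tsum 9 (2 * N))); first by apply: tsum_stab => //; lia.
rewrite -Ssum4_tsum; apply: eqX_sym; exact: J_lemma.
Qed.

Lemma map_f r M : map_poly (intr : int -> F2) (f_trunc r M) = F r M.
Proof.
rewrite /f_trunc /F rmorph_prod; apply: eq_bigr => j _.
by rewrite rmorphB rmorph1 /= map_polyXn oppP.
Qed.

Lemma map_g r M : map_poly (intr : int -> F2) (finv_trunc r M) = G r M.
Proof.
rewrite /finv_trunc /G rmorph_prod; apply: eq_bigr => j _.
by rewrite rmorph_sum; apply: eq_bigr => k _; rewrite /= map_polyXn.
Qed.

Definition H K := F 3 K * F 4 K * G 1 K * G 12 K.

Lemma b2_coef K : ((b2_34 K)%:~R : F2) = (H K \Po 'X^2)`_K.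
Proof.
rewrite -sqr_dil /b2_34 -coef_map !rmorphM /= !map_f !map_g /H; apply: (congr1 (fun p : P => p`_K)).
move: (F 3 K) (F 4 K) (G 1 K) (G 12 K) => a b c d; ring.
Qed.

Lemma b3_coef n : ((b3_3 n)%:~R : F2) = (F 3 n ^+ 3 * G 1 n ^+ 3)`_n.
Proof.
rewrite /b3_3 -coef_map !rmorphM /= !map_f !map_g; apply: (congr1 (fun p : P => p`_n)).
move: (F 3 n) (G 1 n) => a b; ring.
Qed.

Lemma p_coef n : ((partp n)%:~R : F2) = (G 1 n)`_n.
Proof. by rewrite /partp -coef_map map_g. Qed.

Lemma H_cong K :
  eqX K.+1 (H K) (G 1 K \Po 'X^6 + 'X * ((F 3 K ^+ 3 * G 1 K ^+ 3) \Po 'X^3)).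
Proof.
have e4 : F 4 K = F 1 K ^+ 4.
  by rewrite -[4%N]/(2 * 2)%N exprM !F_sqr.
have e12 : G 12 K = G 3 K ^+ 4.
  by rewrite -[4%N]/(2 * 2)%N exprM !G_sqr.
have hH : H K = (F 1 K ^+ 3 * G 3 K ^+ 3) * ((F 1 K * G 1 K) * (F 3 K * G 3 K)).
  rewrite /H e4 e12; move: (F 1 K) (F 3 K) (G 1 K) (G 3 K) => a b c d; ring.
rewrite hH; apply: (@eqX_trans _ _ ((F 1 K ^+ 3 * G 3 K ^+ 3) * (1 * 1))).
  by apply: eqX_mul => //; apply: eqX_mul; apply: FG1.
rewrite mulr1 mulr1.
apply: (@eqX_trans _ _ ((F 3 K + 'X * F 9 K ^+ 3) * G 3 K ^+ 3)).
  by apply: eqX_mul => //; apply: key_lemma.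
rewrite mulrDl; apply: eqX_add.
  apply: (@eqX_trans _ _ (1 * G 3 K ^+ 2)).
    rewrite exprS mulrA; apply: eqX_mul => //; exact: FG1.
  rewrite mul1r G_sqr G_dil; exact: eqX_refl.
rewrite -mulrA; apply: eqX_mul => //.
by rewrite rmorphM !rmorphXn /= F_dil G_dil.
Qed.

Lemma ndvd d i : (0 < d)%N -> (i %% d != 0)%N -> ~~ (d %| i)%N.
Proof. by move=> d0 h; rewrite /dvdn. Qed.

Lemma modF2 (a b : int) : (a%:~R : F2) = b%:~R -> (a = b %[mod 2])%Z.
Proof.
move=> h; apply/eqP; rewrite eqz_mod_dvd; apply/dvdz_mod0P.
have h0 : ((a - b)%:~R : F2) = 0 by rewrite intrB h subrr.
move: h0; rewrite {1}(divz_eq (a - b) 2) intrD intrM.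
have -> : ((2 : int)%:~R : F2) = 0 by rewrite -two0.
rewrite mulr0 add0r.
have := modz_ge0 (a - b) (isT : (2 : int) != 0).
have := ltz_pmod (a - b) (isT : (0 < (2 : int))).
by case: ((a - b) %% 2)%Z => [[|[|k]]|k].
Qed.

Lemma part1 n : ((b2_34 (6 * n + 4))%:~R : F2) = 0.
Proof.
rewrite b2_coef -[(6 * n + 4)%N]/(6 * n + 4)%N.
have -> : (6 * n + 4 = 2 * (3 * n + 2))%N by lia.
rewrite coef_dil // H_cong; last by lia.
rewrite coefD coefXM addn2 /= !coef_dil0 ?addr0 //; apply/negP => /dvdnP [q hq]; lia.
Qed.

Lemma part2 n : ((b2_34 (6 * n + 2))%:~R : F2) = (b3_3 n)%:~R.
Proof.
rewrite b2_coef b3_coef.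
have -> : (6 * n + 2 = 2 * (3 * n + 1))%N by lia.
rewrite coef_dil // H_cong; last by lia.
rewrite coefD coefXM addn1 /= coef_dil0 ?add0r //; last first.
  by apply/negP => /dvdnP [q hq]; lia.
rewrite coef_dil //.
have hW : eqX n.+1 (F 3 (2 * (3 * n).+1) ^+ 3 * G 1 (2 * (3 * n).+1) ^+ 3)
                   (F 3 n ^+ 3 * G 1 n ^+ 3).
  apply: eqX_mul; apply: eqX_exp; [apply: F_stab' | apply: G_stab]; lia.
exact: hW.
Qed.

Lemma part3 n : ((b2_34 (12 * n + 6))%:~R : F2) = 0.
Proof.
rewrite b2_coef.
have -> : (12 * n + 6 = 2 * (6 * n + 3))%N by lia.
rewrite coef_dil // H_cong; last by lia.
rewrite coefD coefXM addn3 /= !coef_dil0 ?addr0 //; apply/negP => /dvdnP [q hq]; lia.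
Qed.

Lemma part4 n : (0 < n)%N -> ((b2_34 (12 * n))%:~R : F2) = (partp n)%:~R.
Proof.
move=> n0; rewrite b2_coef p_coef.
have -> : (12 * n = 2 * (6 * n))%N by lia.
rewrite coef_dil // H_cong; last by lia.
rewrite coefD coefXM coef_dil //.
have -> : (6 * n == 0)%N = false by rewrite muln_eq0 /= eqn0Ngt n0.
rewrite coef_dil0 ?addr0 //; last by apply/negP => /dvdnP [q hq]; lia.
apply: (@G_stab 1 (2 * (6 * n)) n n.+1) => //; lia.
Qed.

Lemma modF2_0 (a : int) : (a%:~R : F2) = 0 -> (a = 0 %[mod 2])%Z.
Proof. by move=> h; apply: modF2; rewrite h. Qed.

Theorem mainTheorem5 (n : nat) : (0 < n)%N ->
  [/\ (b2_34 (6 * n + 4) = 0 %[mod 2])%Z,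
      (b2_34 (6 * n + 2) = b3_3 n %[mod 2])%Z,
      (b2_34 (12 * n + 6) = 0 %[mod 2])%Z
    & (b2_34 (12 * n) = partp n %[mod 2])%Z].
Proof.
move=> n0; split.
- exact: modF2_0 (part1 n).
- exact: modF2 (part2 n).
- exact: modF2_0 (part3 n).
- exact: modF2 (part4 n0).
Qed.
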